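(* Let $(\Omega,\mathcal{F})$ be a measurable space, $\mathrm{B}_b$ the space of bounded real-valued measurable functions, $C\subset\mathrm{B}_b$ a linear subspace containing the constants, and $H\colon C\to\mathbb{R}$ a convex premium principle. Let $R_{\mathrm{Max}}(X):=\inf\{H(X_0)\mid X_0\in C,\ X_0\ge X\}$ for $X\in\mathrm{B}_b$ and $D_{\mathrm{Min}}(X):=H(X)-R_{\mathrm{Max}}(X)$ for $X\in C$. Let $\mathcal{P}:=\{\mathbb{P}\in\mathrm{ba}_+^1\mid H^*(\mathbb{P})<\infty\}$ and, for $\mathbb{P}\in\mathcal{P}$, $D_{\mathbb{P}}(X):=H(X-\mathbb{E}_{\mathbb{P}}(X))$ for $X\in C$. Then $$D_{\mathrm{Min}}(X)=\min_{\mathbb{P}\in\mathcal{P}}\big(D_{\mathbb{P}}(X)+H^*(\mathbb{P})\big)\quad\text{for all }X\in C.$$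
   Context: A premium principle is a map $H\colon C\to\mathbb{R}$ with $H(X+m)=H(X)+m$ for $X\in C$, $m\in\mathbb{R}$, $H(0)=0$, and $H(X)\ge0$ for $X\in C$ with $X\ge0$ (pointwise order). Convex means $H(\lambda X+(1-\lambda)Y)\le\lambda H(X)+(1-\lambda)H(Y)$ for $\lambda\in[0,1]$. $\mathrm{ba}_+^1$ is the set of finitely additive probability measures on $(\Omega,\mathcal{F})$, $\mathbb{E}_{\mathbb{P}}$ the associated integral, and $H^*(\mathbb{P}):=\sup_{X\in C}(\mathbb{E}_{\mathbb{P}}(X)-H(X))\in[0,\infty]$. *)

(* Defs.v *)
From HB Require Import structures.
From mathcomp Require Import all_boot all_order all_algebra.
From mathcomp Require Import all_classical all_reals all_analysis.
Set Implicit Arguments. Unset Strict Implicit. Unset Printing Implicit Defensive.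
Import Order.TTheory GRing.Theory Num.Theory.
Local Open Scope classical_set_scope.
Local Open Scope ring_scope.

Definition Bb (d : measure_display) (T : measurableType d) (R : realType)
  : set (T -> R) :=
  [set X : T -> R | measurable_fun setT X /\ exists M : R, forall w, `|X w| <= M].

Definition lin_subspace_with_consts (d : measure_display) (T : measurableType d)
  (R : realType) (C : set (T -> R)) : Prop :=
  [/\ C `<=` @Bb _ T R,
      (forall X Y, C X -> C Y -> C (X \+ Y)),
      (forall (a : R) X, C X -> C (fun w => a * X w)) &
      (forall m : R, C (fun _ => m))].

(* Premium principle H : C -> R (H is a total function, only its values on C matter). *)
Definition premium_principle (T : Type) (R : realType) (C : set (T -> R))
  (H : (T -> R) -> R) : Prop :=
  [/\ (forall X (m : R), C X -> H (fun w => X w + m) = H X + m),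
      H (fun _ => 0) = 0 &
      (forall X, C X -> (forall w, 0 <= X w) -> 0 <= H X)].

Definition convex_on (T : Type) (R : realType) (C : set (T -> R))
  (H : (T -> R) -> R) : Prop :=
  forall X Y (l : R), C X -> C Y -> 0 <= l <= 1 ->
    H (fun w => l * X w + (1 - l) * Y w) <= l * H X + (1 - l) * H Y.

(* ba_+^1 : finitely additive probability measures on (T, F);
   only the values on measurable sets are relevant. *)
Definition fa_prob (d : measure_display) (T : measurableType d) (R : realType)
  (P : set T -> R) : Prop :=
  [/\ P setT = 1,
      (forall A, measurable A -> 0 <= P A) &
      (forall A B, measurable A -> measurable B -> A `&` B = set0 ->
         P (A `|` B) = P A + P B)].

Definition fin_meas_partition (d : measure_display) (T : measurableType d)
  (n : nat) (A : nat -> set T) : Prop :=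
  [/\ (forall i, (i < n)%N -> measurable (A i)),
      (forall i j, (i < j < n)%N -> A i `&` A j = set0) &
      \bigcup_(i in [set k | (k < n)%N]) A i = setT].

(* Integral E_P(X) of a bounded measurable X w.r.t. a finitely additive
   probability P: supremum of the lower (Darboux) sums over finite measurable
   partitions. *)
Definition Eint (d : measure_display) (T : measurableType d) (R : realType)
  (P : set T -> R) (X : T -> R) : R :=
  sup [set s | exists n A, fin_meas_partition n A /\
        s = \sum_(i < n) inf (X @` A i) * P (A i)].

Definition Hstar (d : measure_display) (T : measurableType d) (R : realType)
  (C : set (T -> R)) (H : (T -> R) -> R) (P : set T -> R) : \bar R :=
  ereal_sup [set ((Eint P X - H X)%:E) | X in C].

Definition RMax (T : Type) (R : realType) (C : set (T -> R))
  (H : (T -> R) -> R) (X : T -> R) : \bar R :=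
  ereal_inf [set (H X0)%:E | X0 in [set Y | C Y /\ forall w, X w <= Y w]].

Definition DMin (T : Type) (R : realType) (C : set (T -> R))
  (H : (T -> R) -> R) (X : T -> R) : \bar R :=
  ((H X)%:E - RMax C H X)%E.

Definition calP (d : measure_display) (T : measurableType d) (R : realType)
  (C : set (T -> R)) (H : (T -> R) -> R) : set (set T -> R) :=
  [set P | fa_prob P /\ (Hstar C H P < +oo)%E].

Definition DP (d : measure_display) (T : measurableType d) (R : realType)
  (H : (T -> R) -> R) (P : set T -> R) (X : T -> R) : R :=
  H (fun w => X w - Eint P X).

(* Main.v *)
Require Import Defs.
From HB Require Import structures.
From mathcomp Require Import all_boot all_order all_algebra.
From mathcomp Require Import all_classical all_reals all_analysis.
From mathcomp Require Import wochoice.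
From mathcomp Require Import ring lra.
Import Order.TTheory GRing.Theory Num.Theory.
Local Open Scope classical_set_scope.
Local Open Scope ring_scope.
Lemma my_inf_le {R : realType} {E : set R} {x : R} {b : R} :
  (forall y, E y -> b <= y) -> E x -> inf E <= x.
Proof. by move=> lb Ex; apply: ge_inf => //; exists b => y /lb. Qed.

Lemma my_le_inf {R : realType} {E : set R} {b : R} :
  E !=set0 -> (forall y, E y -> b <= y) -> b <= inf E.
Proof. by move=> ne lb; apply: lb_le_inf. Qed.

Section HahnBanach.
Variables (R : realType) (U : lmodType R) (V : set U).
Hypotheses (V0 : V 0) (VD : forall x y, V x -> V y -> V (x + y))
  (VZ : forall (a : R) x, V x -> V (a *: x)).

Definition sublin (q : U -> R) :=
  (forall x y, V x -> V y -> q (x + y) <= q x + q y) /\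
  (forall (t : R) x, 0 < t -> V x -> q (t *: x) = t * q x).

Lemma VN {x} : V x -> V (- x).
Proof. by move=> Vx; rewrite -scaleN1r; apply: VZ. Qed.

Lemma sublin0 {q} : sublin q -> q 0 = 0.
Proof.
case=> _ hom; have := hom 2 0 (ltr0Sn _ 1) V0; rewrite scaler0 => h; lra.
Qed.

Lemma sublinN {q x} : sublin q -> V x -> - q (- x) <= q x.
Proof.
move=> sq Vx; have := sq.1 _ _ Vx (VN Vx); rewrite subrr sublin0 //; lra.
Qed.

Lemma sublinW {q t x} : sublin q -> 0 <= t -> V x -> q (t *: x) = t * q x.
Proof.
move=> sq; rewrite le0r => /orP[/eqP->|t0] Vx; last exact: sq.2.
by rewrite scale0r mul0r sublin0.
Qed.

Variable p : U -> R.
Hypothesis sp : sublin p.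

Definition HBS : {pred (U -> R)} :=
  fun q => `[< sublin q /\ forall x, V x -> q x <= p x >].
Definition HBR : rel (U -> R) :=
  fun q1 q2 => `[< forall x, V x -> q2 x <= q1 x >].

Lemma HBS_P q : q \in HBS <-> (sublin q /\ forall x, V x -> q x <= p x).
Proof. by rewrite unfold_in /HBS; split => /asboolP. Qed.

Lemma HBR_P q1 q2 : HBR q1 q2 <-> (forall x, V x -> q2 x <= q1 x).
Proof. by rewrite /HBR; split => /asboolP. Qed.

Section Chain.
Variable C : {pred (U -> R)}.
Hypothesis CS : {subset C <= HBS}.
Hypothesis Ctot : {in C &, total HBR}.

Let A := [set q | q = p \/ q \in C].
Let z := fun x => inf [set a x | a in A].

Let Asub {a} : A a -> sublin a /\ forall x, V x -> a x <= p x.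
Proof. by case=> [->|/CS/HBS_P//]; split => // x _; rewrite lexx. Qed.

Let Alb {a x} : A a -> V x -> - p (- x) <= a x.
Proof.
move=> /Asub[sa ap] Vx; apply: (le_trans _ (sublinN sa Vx)).
by rewrite lerN2; apply: ap; apply: VN.
Qed.

Let zle {a x} : A a -> V x -> z x <= a x.
Proof.
move=> Aa Vx; apply: (@my_inf_le _ _ _ (- p (- x))) => [_ [b Ab <-]|]; first exact: Alb.
by exists a.
Qed.

Let Ane x : [set a x | a in A] !=set0.
Proof. by exists (p x), p => //; left. Qed.

Let Akey a b : A a -> A b -> exists c, [/\ A c, c \in HBS,
   (forall x, V x -> c x <= a x) & (forall x, V x -> c x <= b x)].
Proof.
move=> Aa Ab.
have Ap c : A c -> c \in HBS by move=> /Asub ?; apply/HBS_P.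
have Aa' := Aa; have Ab' := Ab.
case: Aa => [->|Ca].
  exists b; split; [by [] | exact: Ap | | by move=> *; rewrite lexx].
  by move=> x Vx; case: (Asub Ab') => _; apply.
case: Ab => [->|Cb].
  exists a; split; [by [] | exact: Ap | by move=> *; rewrite lexx | ].
  by move=> x Vx; case: (Asub Aa') => _; apply.
case/orP: (Ctot a b Ca Cb) => /HBR_P h.
  by exists b; split; [by [] | exact: Ap | by [] | by move=> *; rewrite lexx].
by exists a; split; [by [] | exact: Ap | by move=> *; rewrite lexx | by []].
Qed.

Lemma chain_sublin : sublin z.
Proof.
split.
  move=> x y Vx Vy.
  have key a b : A a -> A b -> z (x + y) <= a x + b y.
    move=> Aa Ab; have [c [Ac /HBS_P[sc _] ca cb]] := Akey _ _ Aa Ab.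
    apply: le_trans (zle Ac (VD _ _ Vx Vy)) _.
    apply: le_trans (sc.1 _ _ Vx Vy) _; apply: lerD; [exact: ca | exact: cb].
  have k2 b : A b -> z (x + y) - b y <= z x.
    move=> Ab; apply: my_le_inf => // _ [a Aa <-]; have := key a b Aa Ab; lra.
  suff : z (x + y) - z x <= z y by lra.
  apply: my_le_inf => // _ [b Ab <-]; have := k2 b Ab; lra.
move=> t x t0 Vx; apply/eqP; rewrite eq_le; apply/andP; split.
  have h : t^-1 * z (t *: x) <= z x.
    apply: my_le_inf => // _ [a Aa <-].
    have := zle Aa (VZ t _ Vx); rewrite (Asub Aa).1.2 // => h.
    rewrite -(ler_pM2l t0) mulrA divff ?mul1r //; exact: lt0r_neq0.
  by rewrite -(ler_pM2l (_ : 0 < t^-1)) ?invr_gt0 //  mulrA mulVf ?mul1r //; exact: lt0r_neq0.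
apply: my_le_inf => // _ [a Aa <-].
rewrite (Asub Aa).1.2 //; rewrite ler_pM2l //; exact: zle.
Qed.

Lemma chain_bound : exists2 w, w \in HBS & upper_bound HBR C w.
Proof.
exists z.
  apply/HBS_P; split; first exact: chain_sublin.
  by move=> x Vx; apply: zle => //; left.
by move=> q Cq; apply/HBR_P => x Vx; apply: zle => //; right.
Qed.
End Chain.

Lemma min_odd q0 : q0 \in HBS -> {in HBS, maximal HBR q0} ->
  forall h, V h -> q0 (- h) <= - q0 h.
Proof.
move=> /HBS_P[s0 p0] mx h Vh.
pose qh := fun k => inf [set q0 (k + t *: h) - t * q0 h | t in [set t : R | 0 <= t]].
have ne k : [set q0 (k + t *: h) - t * q0 h | t in [set t : R | 0 <= t]] !=set0.
  by exists (q0 (k + 0 *: h) - 0 * q0 h); exists 0; rewrite /= ?lexx.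
have lb k t : V k -> 0 <= t -> - q0 (- k) <= q0 (k + t *: h) - t * q0 h.
  move=> Vk t0; rewrite -(sublinW s0 t0 Vh).
  have := s0.1 _ _ (VD _ _ Vk (VZ t _ Vh)) (VN Vk).
  by rewrite addrC addKr; lra.
have qhle k t : V k -> 0 <= t -> qh k <= q0 (k + t *: h) - t * q0 h.
  by move=> Vk t0; apply: (@my_inf_le _ _ _ (- q0 (- k))) => [_ [s s0' <-]|]; [exact: lb|exists t].
have qh_q0 k : V k -> qh k <= q0 k.
  by move=> Vk; have := qhle k 0 Vk (lexx _); rewrite scale0r addr0 mul0r subr0.
have shq : sublin qh.
  split.
    move=> x y Vx Vy.
    have key t1 t2 : 0 <= t1 -> 0 <= t2 -> qh (x + y) <=
        (q0 (x + t1 *: h) - t1 * q0 h) + (q0 (y + t2 *: h) - t2 * q0 h).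
      move=> t10 t20; apply: le_trans (qhle _ (t1 + t2) (VD _ _ Vx Vy) (addr_ge0 t10 t20)) _.
      have := s0.1 _ _ (VD _ _ Vx (VZ t1 _ Vh)) (VD _ _ Vy (VZ t2 _ Vh)).
      rewrite addrACA -scalerDl; lra.
    have k2 t2 : 0 <= t2 -> qh (x + y) - (q0 (y + t2 *: h) - t2 * q0 h) <= qh x.
      move=> t20; apply: my_le_inf => // _ [t1 t10 <-]; have := key t1 t2 t10 t20; lra.
    suff : qh (x + y) - qh x <= qh y by lra.
    apply: my_le_inf => // _ [t2 t20 <-]; have := k2 t2 t20; lra.
  move=> s x s0' Vx; apply/eqP; rewrite eq_le; apply/andP; split.
    have h1 : s^-1 * qh (s *: x) <= qh x.
      apply: my_le_inf => // _ [t t0 <-].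
      have := qhle (s *: x) (s * t) (VZ s _ Vx) (mulr_ge0 (ltW s0') t0).
      rewrite -scalerA -scalerDr (s0.2 _ _ s0' (VD _ _ Vx (VZ t _ Vh))) => hh.
      rewrite -(ler_pM2l s0') mulrA divff ?mul1r ?gt_eqF //; lra.
    by rewrite -(ler_pM2l (_ : 0 < s^-1)) ?invr_gt0 //  mulrA mulVf ?mul1r ?gt_eqF.
  apply: my_le_inf => // _ [t t0 <-].
  have e : s *: x + t *: h = s *: (x + (t / s) *: h).
    by rewrite scalerDr scalerA mulrCA divff ?mulr1 ?gt_eqF.
  rewrite e (s0.2 _ _ s0' (VD _ _ Vx (VZ _ _ Vh))).
  have := qhle x (t / s) Vx (divr_ge0 t0 (ltW s0')).
  rewrite -(ler_pM2l s0') => hh; apply: le_trans hh _.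
  rewrite mulrBr mulrA mulrCA divff ?mulr1 ?gt_eqF //.
have Sqh : qh \in HBS.
  apply/HBS_P; split => // x Vx; apply: le_trans (qh_q0 x Vx) _; exact: p0.
have := mx qh Sqh; rewrite /= => /(_ _)/HBR_P.
have : HBR q0 qh by apply/HBR_P.
move=> H1 /(_ H1) H2.
have := H2 _ (VN Vh); move=> H3; apply: le_trans H3 _.
have := qhle (- h) 1 (VN Vh) ler01; rewrite scale1r addNr sublin0 // mul1r sub0r.
done.
Qed.

Theorem hahn_banach : exists f : U -> R,
  (forall (a : R) x y, V x -> V y -> f (a *: x + y) = a * f x + f y) /\
  (forall x, V x -> f x <= p x).
Proof.
have refl : {in HBS, reflexive HBR} by move=> q _; apply/HBR_P => *; rewrite lexx.
have trans : {in HBS & &, transitive HBR}.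
  move=> q2 q1 q3 _ _ _ /HBR_P h1 /HBR_P h2; apply/HBR_P => x Vx.
  exact: le_trans (h2 _ Vx) (h1 _ Vx).
have ch : {in <= HBS, forall C, wo_chain HBR C -> exists2 z, z \in HBS & upper_bound HBR C z}.
  move=> C CS wC; apply: chain_bound => //; exact: wo_chainW.
have [q0 Sq0 mx] := Zorn's_lemma refl trans ch.
have odd := min_odd _ Sq0 mx.
move/HBS_P: Sq0 => [s0 p0].
have oddE x : V x -> q0 (- x) = - q0 x.
  move=> Vx; apply/eqP; rewrite eq_le odd //=.
  have := sublinN s0 (VN Vx); rewrite opprK; lra.
have add x y : V x -> V y -> q0 (x + y) = q0 x + q0 y.
  move=> Vx Vy; apply/eqP; rewrite eq_le s0.1 //=.
  have := s0.1 _ _ (VN Vx) (VN Vy); rewrite -opprD !oddE //; [lra | exact: VD].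
have scal a x : V x -> q0 (a *: x) = a * q0 x.
  move=> Vx; case: (ltgtP a 0) => [a0|a0|->].
  - have -> : a *: x = (- a) *: (- x) by rewrite scaleNr scalerN opprK.
    rewrite s0.2 ?oppr_gt0 // ?oddE //; [ring | exact: VN].
  - exact: s0.2.
  - by rewrite scale0r mul0r sublin0.
exists q0; split => // a x y Vx Vy; rewrite add ?scal //; exact: VZ.
Qed.
End HahnBanach.
Section BbLemmas.
Variables (d : measure_display) (T : measurableType d) (R : realType).

Lemma Bb_add (Y Z : T -> R) : Bb Y -> Bb Z -> Bb (fun w => Y w + Z w).
Proof.
move=> [mY [M1 h1]] [mZ [M2 h2]]; split; first exact: measurable_realfun.measurable_funD.
exists (M1 + M2) => w; apply: le_trans (ler_normD _ _) _; exact: lerD.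
Qed.

Lemma Bb_scale (a : R) (Y : T -> R) : Bb Y -> Bb (fun w => a * Y w).
Proof.
move=> [mY [M h]]; split; first exact: (measurable_realfun.measurable_funM (measurable_cst a) mY).
exists (`|a| * M) => w; rewrite normrM; apply: ler_wpM2l => //.
Qed.

Lemma Bb_cst (c : R) : Bb (fun _ : T => c).
Proof. by split; [exact: measurable_cst | exists `|c|]. Qed.

Lemma Bb_indic (A : set T) : measurable A -> Bb (\1_A : T -> R).
Proof.
move=> mA; split; first exact: measurable_realfun.measurable_indic.
by exists 1 => w; rewrite indicE; case: (w \in A); rewrite ?normr1 ?normr0.
Qed.

Lemma Bb_bound (Y : T -> R) : Bb Y -> exists M, 0 <= M /\ forall w, - M <= Y w <= M.
Proof.
move=> [_ [M h]]; exists (Num.max M 0); split; first by rewrite le_max lexx orbT.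
move=> w; have := h w; rewrite ler_norml => /andP[a b].
apply/andP; split; [apply: le_trans a; rewrite lerN2 le_max lexx //|].
apply: le_trans b _; rewrite le_max lexx //.
Qed.
End BbLemmas.
Arguments Bb_add {d T R Y Z}.
Arguments Bb_scale {d T R} a {Y}.
Arguments Bb_cst {d T R}.
Arguments Bb_indic {d T R A}.
Arguments Bb_bound {d T R Y}.
Section EintLemmas.
Variables (d : measure_display) (T : measurableType d) (R : realType).

Lemma part_cover {n} {A : nat -> set T} w : fin_meas_partition n A ->
  exists j, (j < n)%N /\ A j w.
Proof.
case=> _ _ cov; have : (\bigcup_(i in [set k | (k < n)%N]) A i) w by rewrite cov.
by case=> j hj Ajw; exists j.
Qed.

Lemma part_disj {n} {A : nat -> set T} {i j w} : fin_meas_partition n A ->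
  (i < n)%N -> (j < n)%N -> A i w -> A j w -> i = j.
Proof.
case=> _ dis _ hi hj Ai Aj; case: (ltngtP i j) => // h.
  have : (A i `&` A j) w by split.
  by rewrite dis // h.
have : (A j `&` A i) w by split.
by rewrite dis // h.
Qed.

Lemma part_sum n (A : nat -> set T) (c : nat -> R) w j :
  fin_meas_partition n A -> (j < n)%N -> A j w ->
  \sum_(i < n) c i * (\1_(A i) w : R) = c j.
Proof.
move=> hp hj Aj; rewrite (bigD1 (Ordinal hj)) //= big1 ?addr0.
  by rewrite indicE (_ : w \in A j) ?mulr1 //; apply: mem_set.
move=> i /eqP ne; rewrite indicE.
case: (boolP (w \in A i)) => wi; last by rewrite mulr0.
exfalso; apply: ne; apply: val_inj => /=.
exact: (part_disj hp (ltn_ord i) hj (set_mem wi) Aj).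
Qed.

Lemma fa_set0 (P : set T -> R) : fa_prob P -> P set0 = 0.
Proof.
case=> _ _ add; have := add set0 set0 measurable0 measurable0 (setI0 _).
rewrite setU0; lra.
Qed.

Lemma fa_sum {P : set T -> R} {n A} : fa_prob P -> fin_meas_partition n A ->
  \sum_(i < n) P (A i) = 1.
Proof.
move=> fP hp; have [mA dis cov] := hp; case: (fP) => P1 P0 Padd.
suff : forall m, (m <= n)%N -> measurable (\bigcup_(i in [set k | (k < m)%N]) A i) /\
   P (\bigcup_(i in [set k | (k < m)%N]) A i) = \sum_(i < m) P (A i).
  by move=> /(_ n (leqnn n))[_ <-]; rewrite cov.
elim=> [_|m IH hm].
  have -> : [set k | (k < 0)%N] = set0 by apply/seteqP; split => k.
  by rewrite bigcup_set0 big_ord0 fa_set0 //; split.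
have [mU PU] := IH (ltnW hm).
have e : \bigcup_(i in [set k | (k < m.+1)%N]) A i =
    (\bigcup_(i in [set k | (k < m)%N]) A i) `|` A m.
  apply/seteqP; split => w.
    case=> i /= hi Aiw; rewrite ltnS leq_eqVlt in hi; case/orP: hi => [/eqP e|hi].
      by right; rewrite -e.
    by left; exists i.
  case=> [[i /= hi Aiw]|Amw]; first by exists i => //=; apply: ltnW.
  by exists m => //=.
rewrite e big_ord_recr /=; split; first by apply: measurableU => //; exact: mA.
rewrite Padd //; [by rewrite PU | exact: mA |].
apply/seteqP; split => // w [[i /= hi Aiw] Amw].
by have := part_disj hp (ltn_trans hi hm) hm Aiw Amw => /eqP; rewrite ltn_eqF.
Qed.

Definition lsum (P : set T -> R) (Y : T -> R) n (A : nat -> set T) :=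
  \sum_(i < n) inf (Y @` A i) * P (A i).

Definition Lset (P : set T -> R) (Y : T -> R) :=
  [set s | exists n A, fin_meas_partition n A /\ s = lsum P Y n A].

Lemma Eint_Lset (P : set T -> R) (Y : T -> R) : Eint P Y = sup (Lset P Y).
Proof. by []. Qed.

Lemma part1 : fin_meas_partition 1 (fun _ => @setT T).
Proof.
split => //; first by move=> i j /andP[a b]; move: (leq_trans a b).
by apply/seteqP; split => // w _; exists 0%N.
Qed.

Lemma Lset_ne (P : set T -> R) (Y : T -> R) : Lset P Y !=set0.
Proof. by exists (lsum P Y 1 (fun _ => setT)), 1%N, (fun _ => setT); split => //; exact: part1. Qed.

Lemma inf_img_le {A : set T} {Y Z : T -> R} M :
  (forall w, - M <= Y w) -> (forall w, A w -> Y w <= Z w) ->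
  inf (Y @` A) <= inf (Z @` A).
Proof.
move=> lb le; have [[w Aw]|nA] := pselect (exists w, A w).
  apply: my_le_inf; first by exists (Z w), w.
  move=> _ [v Av <-]; apply: le_trans (le v Av).
  by apply: (@my_inf_le _ _ _ (- M)) => [_ [u _ <-]|]; [exact: lb | exists v].
have e : forall F : T -> R, F @` A = set0.
  by move=> F; apply/seteqP; split => // y [v Av _]; apply: nA; exists v.
by rewrite !e.
Qed.

Lemma inf_img_ub {A : set T} {Y : T -> R} {M} : 0 <= M ->
  (forall w, - M <= Y w <= M) -> inf (Y @` A) <= M.
Proof.
move=> M0 hM; have [[w Aw]|nA] := pselect (exists w, A w).
  apply: le_trans (_ : Y w <= M); last by case/andP: (hM w).
  apply: (@my_inf_le _ _ _ (- M)) => [_ [u _ <-]|]; last by exists w.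
  by case/andP: (hM u).
have -> : Y @` A = set0.
  by apply/seteqP; split => // y [v Av _]; apply: nA; exists v.
by rewrite inf0.
Qed.

Lemma Lset_ub (P : set T -> R) (Y : T -> R) : fa_prob P -> Bb Y -> has_ubound (Lset P Y).
Proof.
move=> fP /Bb_bound[M [M0 hM]]; exists M => _ [n [A [hp ->]]].
have [mA _ _] := hp; case: (fP) => _ P0 _.
apply: le_trans (_ : \sum_(i < n) M * P (A i) <= M).
  apply: ler_sum => i _; apply: ler_wpM2r; first by apply: P0; apply: mA.
  exact: (inf_img_ub M0 hM).
by rewrite -mulr_sumr (fa_sum fP hp) mulr1.
Qed.

Lemma Eint_mono (P : set T -> R) (Y Z : T -> R) : fa_prob P -> Bb Y -> Bb Z -> (forall w, Y w <= Z w) ->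
  Eint P Y <= Eint P Z.
Proof.
move=> fP BY BZ le; rewrite !Eint_Lset; apply: ge_sup; first exact: Lset_ne.
move=> _ [n [A [hp ->]]]; have [mA _ _] := hp; case: (fP) => _ P0 _.
have [M [M0 hM]] := Bb_bound BY.
apply: le_trans (_ : lsum P Z n A <= _); last first.
  by apply: ub_le_sup; [exact: Lset_ub | exists n, A].
apply: ler_sum => i _; apply: ler_wpM2r; first by apply: P0; apply: mA.
apply: (@inf_img_le _ _ _ M) => [w|w _]; last exact: le.
by case/andP: (hM w).
Qed.
End EintLemmas.
Arguments lsum {d T R}. Arguments Lset {d T R}. Arguments Eint_Lset {d T R}.
Arguments Lset_ne {d T R}. Arguments Lset_ub {d T R}. Arguments Eint_mono {d T R}.
Arguments part_sum {d T R n A} c {w j}. Arguments part_cover {d T n A}.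
Arguments part_disj {d T n A i j w}. Arguments fa_sum {d T R P n A}.
Arguments fa_set0 {d T R}. Arguments inf_img_le {d T R A Y Z}.
Arguments inf_img_ub {d T R A Y M}. Arguments part1 {d T}.
Section EintPhi.
Variables (d : measure_display) (T : measurableType d) (R : realType)
  (f : (T -> R) -> R).
Hypotheses (flin : forall a x y, @Bb d T R x -> Bb y -> f (a *: x + y) = a * f x + f y)
  (fmono : forall Y Z, @Bb d T R Y -> Bb Z -> (forall w, Y w <= Z w) -> f Y <= f Z)
  (fcst : forall c, f (cst c) = c).

Let Pf := fun A => f (\1_A).

Lemma f_simple n (A : nat -> set T) (c : nat -> R) :
  (forall i, (i < n)%N -> measurable (A i)) ->
  Bb (fun w => \sum_(i < n) c i * (\1_(A i) w : R)) /\
  f (fun w => \sum_(i < n) c i * (\1_(A i) w : R)) = \sum_(i < n) c i * Pf (A i).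
Proof.
elim: n => [_|n IH mA].
  have -> : (fun w => \sum_(i < 0) c i * (\1_(A i) w : R)) = cst 0.
    by apply/funext => w; rewrite big_ord0.
  by rewrite big_ord0 fcst; split => //; exact: (Bb_cst 0).
have [B1 f1] := IH (fun i hi => mA i (ltnW hi)).
have BA : Bb (\1_(A n) : T -> R) by apply: Bb_indic; apply: mA.
have -> : (fun w => \sum_(i < n.+1) c i * (\1_(A i) w : R)) =
    (c n *: (\1_(A n) : T -> R) + ((fun w => \sum_(i < n) c i * (\1_(A i) w : R)) : T -> R)).
  by apply/funext => w; rewrite big_ord_recr /= addrC !fctE /GRing.scale.
split; first exact: (Bb_add (Bb_scale (c n) BA) B1).
by rewrite flin // f1 big_ord_recr /= addrC.
Qed.

Lemma Lset_le Y : Bb Y -> forall s, Lset Pf Y s -> s <= f Y.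
Proof.
move=> BY _ [n [A [hp ->]]]; have [mA _ _] := hp.
have [M [M0 hM]] := Bb_bound BY.
have [Bs fs] := f_simple _ _ (fun i => inf (Y @` A i)) mA.
rewrite /lsum -fs; apply: fmono => // w /=.
have [j [hj Aj]] := part_cover w hp.
rewrite (part_sum (fun i => inf (Y @` A i)) hp hj Aj).
apply: (@my_inf_le _ _ _ (- M)) => [_ [u _ <-]|]; last by exists w.
by case/andP: (hM u).
Qed.

Lemma Eint_f Y : Bb Y -> Eint Pf Y = f Y.
Proof.
move=> BY; have hub : has_ubound (Lset Pf Y) by exists (f Y); apply: Lset_le.
apply/eqP; rewrite eq_le; apply/andP; split.
  by rewrite Eint_Lset; apply: ge_sup; [exact: Lset_ne | exact: Lset_le].
apply/ler_addgt0Pr => e e0.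
have [mY _] := BY.
have [M [M0 hM]] := Bb_bound BY.
pose N := (Num.trunc (2 * M / e)).+1.
pose A := fun i : nat => [set w | i%:R * e - M <= Y w < i.+1%:R * e - M].
have mA : forall i, (i < N)%N -> measurable (A i).
  move=> i _.
  have -> : A i = setT `&` (Y @^-1` [set` `[i%:R * e - M, i.+1%:R * e - M[%R]).
    by apply/seteqP; split => w; rewrite /= ?in_itv /=; [move=> h; split | case].
  exact: mY.
have hp : fin_meas_partition N A.
  split => //.
    move=> i j /andP[ij jN]; apply/seteqP; split => // w [/andP[_ a] /andP[b _]].
    have : i.+1%:R * e <= j%:R * e :> R by rewrite ler_pM2r // ler_nat.
    lra.
  apply/seteqP; split => // w _.
  have x0 : 0 <= (Y w + M) / e by apply: divr_ge0; [case/andP: (hM w); lra | exact: ltW].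
  have /andP[k1 k2] := truncn_itv x0.
  exists (Num.trunc ((Y w + M) / e)).
    rewrite /= -(ltr_nat R).
    apply: le_lt_trans k1 _.
    have x1 : 0 <= 2 * M / e by apply: divr_ge0; [lra | exact: ltW].
    have /andP[_ k3] := truncn_itv x1.
    apply: le_lt_trans k3; apply: ler_wpM2r; [by rewrite invr_ge0 ltW | ].
    by case/andP: (hM w); lra.
  rewrite /A /=.
  rewrite ler_pdivlMr // in k1; rewrite ltr_pdivrMr // in k2.
  apply/andP; split; lra.
have [Bs fs] := f_simple _ _ (fun i => inf (Y @` A i) + e) mA.
have le1 : f Y <= lsum Pf Y N A + e.
  have -> : lsum Pf Y N A + e = \sum_(i < N) (inf (Y @` A i) + e) * Pf (A i).
    have [_ f1] := f_simple _ _ (fun=> 1) mA.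
    have e1 : (fun w => \sum_(i < N) 1 * (\1_(A i) w : R)) = cst 1.
      apply/funext => w; have [j [hj Aj]] := part_cover w hp.
      by rewrite (part_sum (fun=> 1) hp hj Aj).
    rewrite e1 fcst in f1.
    have f2 : \sum_(i < N) Pf (A i) = 1.
      by rewrite f1; apply: eq_bigr => i _; rewrite mul1r.
    rewrite /lsum [RHS](eq_bigr _ (fun i _ => mulrDl _ _ _)) big_split /=.
    by rewrite -mulr_sumr f2 mulr1.
  rewrite -fs; apply: fmono => // w /=.
  have [j [hj Aj]] := part_cover w hp.
  rewrite (part_sum (fun i => inf (Y @` A i) + e) hp hj Aj).
  have : j%:R * e - M <= inf (Y @` A j).
    apply: my_le_inf; first by exists (Y w), w.
    by move=> _ [u /andP[a _] <-].
  by case/andP: Aj => _; rewrite mulrSr mulrDl mul1r; lra.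
apply: le_trans le1 _; rewrite lerD2r Eint_Lset.
by apply: ub_le_sup => //; exists N, A.
Qed.
End EintPhi.
Section Rho.
Variables (d : measure_display) (T : measurableType d) (R : realType)
  (C : set (T -> R)) (H : (T -> R) -> R).
Hypotheses (hC : lin_subspace_with_consts C) (hH : premium_principle C H)
  (cvx : convex_on C H).

Let CB : C `<=` @Bb d T R. Proof. by case: hC. Qed.
Let Cadd {X Y} : C X -> C Y -> C (fun w => X w + Y w).
Proof. by case: hC => _ h _ _; apply: h. Qed.
Let Cscale {a X} : C X -> C (fun w => a * X w).
Proof. by case: hC => _ _ h _; apply: h. Qed.
Let Ccst m : C (fun _ => m).
Proof. by case: hC. Qed.
Let Hcash {X m} : C X -> H (fun w => X w + m) = H X + m.
Proof. by case: hH => h _ _; apply: h. Qed.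
Let Hpos {X} : C X -> (forall w, 0 <= X w) -> 0 <= H X.
Proof. by case: hH => _ _ h; apply: h. Qed.

Definition Hset (Y : T -> R) :=
  [set H Y0 | Y0 in [set Z | C Z /\ forall w, Y w <= Z w]].
Definition rho (Y : T -> R) := inf (Hset Y).

Lemma H_lb Y0 M : C Y0 -> (forall w, - M <= Y0 w) -> - M <= H Y0.
Proof.
move=> CY h; have := Hpos (Cadd CY (Ccst M)); rewrite Hcash //.
move=> /(_ _) h2; suff : 0 <= H Y0 + M by lra.
by apply: h2 => w; have := h w; lra.
Qed.

Lemma Hset_ne Y : Bb Y -> Hset Y !=set0.
Proof.
move=> /Bb_bound[M [M0 hM]]; exists (H (fun _ => M)), (fun _ => M) => //.
by split => // w; case/andP: (hM w).
Qed.

Lemma Hset_lb Y : Bb Y -> exists b, forall v, Hset Y v -> b <= v.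
Proof.
move=> /Bb_bound[M [M0 hM]]; exists (- M) => _ [Y0 [CY0 le] <-].
apply: H_lb => // w; case/andP: (hM w) => a _; exact: le_trans a (le w).
Qed.

Lemma rho_le Y Y0 : Bb Y -> C Y0 -> (forall w, Y w <= Y0 w) -> rho Y <= H Y0.
Proof.
move=> /Hset_lb[b hb] CY le; rewrite /rho; apply: (my_inf_le hb); by exists Y0.
Qed.

Lemma rho_ge Y b : Bb Y ->
  (forall Y0, C Y0 -> (forall w, Y w <= Y0 w) -> b <= H Y0) -> b <= rho Y.
Proof.
move=> BY h; apply: my_le_inf; first exact: Hset_ne.
by move=> _ [Y0 [CY le] <-]; apply: h.
Qed.

Lemma rho_mono Y Z : Bb Y -> Bb Z -> (forall w, Y w <= Z w) -> rho Y <= rho Z.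
Proof.
move=> BY BZ le; apply: rho_ge => // Y0 CY0 le0; apply: rho_le => // w.
exact: le_trans (le w) (le0 w).
Qed.

Lemma rho_cash Y m : Bb Y -> rho (fun w => Y w + m) = rho Y + m.
Proof.
move=> BY; have BYm : Bb (fun w => Y w + m) by apply: Bb_add => //; exact: Bb_cst.
apply/eqP; rewrite eq_le; apply/andP; split.
  suff : rho (fun w => Y w + m) - m <= rho Y by lra.
  apply: rho_ge => // Y0 CY0 le.
  suff : rho (fun w => Y w + m) <= H (fun w => Y0 w + m) by rewrite Hcash //; lra.
  by apply: rho_le => //; [exact: Cadd | move=> w; rewrite lerD2r].
apply: rho_ge => // Y1 CY1 le.
have : rho Y <= H (fun w => Y1 w + - m).
  apply: rho_le => //; first exact: Cadd.
  by move=> w; have := le w; lra.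
by rewrite Hcash //; lra.
Qed.

Lemma rho_H X : C X -> rho X <= H X.
Proof. by move=> CX; apply: rho_le => //; apply: CB. Qed.

Lemma rho_convex Y Z l : Bb Y -> Bb Z -> 0 < l < 1 ->
  rho (fun w => l * Y w + (1 - l) * Z w) <= l * rho Y + (1 - l) * rho Z.
Proof.
move=> BY BZ /andP[l0 l1].
have l0' : 0 < 1 - l by lra.
have Bc : Bb (fun w => l * Y w + (1 - l) * Z w).
  by apply: Bb_add; apply: Bb_scale.
set K := rho _.
have step1 Z0 : C Z0 -> (forall w, Z w <= Z0 w) -> (K - (1 - l) * H Z0) / l <= rho Y.
  move=> CZ0 lz; apply: rho_ge => // Y0 CY0 ly.
  rewrite ler_pdivrMr //.
  have : K <= H (fun w => l * Y0 w + (1 - l) * Z0 w).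
    apply: rho_le => //; first by apply: Cadd; apply: Cscale.
    move=> w /=; apply: lerD; apply: ler_wpM2l; [exact: ltW | exact: ly | exact: ltW | exact: lz].
  have := cvx _ _ l CY0 CZ0 (_ : 0 <= l <= 1); rewrite (ltW l0) (ltW l1) => /(_ isT).
  lra.
have : (K - l * rho Y) / (1 - l) <= rho Z.
  apply: rho_ge => // Z0 CZ0 lz; rewrite ler_pdivrMr //.
  have := step1 Z0 CZ0 lz; rewrite ler_pdivrMr //; lra.
rewrite ler_pdivrMr //; lra.
Qed.

Variable X : T -> R.
Hypothesis CX : C X.
Let BX : Bb X. Proof. exact: CB. Qed.

Let BXh {h} (t : R) : Bb h -> Bb (X + t *: h).
Proof. by move=> Bh; apply: (Bb_add BX (Bb_scale t Bh)). Qed.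

Definition dq (h : T -> R) (t : R) := (rho (X + t *: h) - rho X) / t.
Definition pdir h := inf [set dq h t | t in [set t : R | 0 < t]].

Lemma dq_lb {h} : Bb h -> exists M, forall t, 0 < t -> - M <= dq h t.
Proof.
move=> Bh; have [M [M0 hM]] := Bb_bound Bh; exists M => t t0.
have le : rho (fun w => X w + - (t * M)) <= rho (X + t *: h).
  apply: rho_mono; [exact: (Bb_add BX (Bb_cst _)) | exact: BXh | ].
  move=> w /=; rewrite lerD2l; case/andP: (hM w) => a _.
  by rewrite -mulrN; apply: ler_wpM2l => //; exact: ltW.
rewrite rho_cash // in le.
rewrite /dq ler_pdivlMr //; lra.
Qed.

Lemma pdir_le {h t} : Bb h -> 0 < t -> pdir h <= dq h t.
Proof.
move=> Bh t0; have [M hM] := dq_lb Bh.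
apply: (@my_inf_le _ _ _ (- M)); first by move=> _ [u u0 <-]; apply: hM.
by exists t.
Qed.

Lemma pdir_ge h b : (forall t, 0 < t -> b <= dq h t) -> b <= pdir h.
Proof.
move=> hb; apply: my_le_inf; first by exists (dq h 1), 1 => //=; exact: ltr01.
by move=> _ [t t0 <-]; apply: hb.
Qed.

Lemma pdir_1 {h} : Bb h -> pdir h <= rho (X + h) - rho X.
Proof.
move=> Bh; have := pdir_le Bh ltr01; rewrite /dq scale1r divr1 //.
Qed.

Lemma pdir_sublin : @sublin R _ (@Bb d T R) pdir.
Proof.
split.
  move=> h k Bh Bk.
  have Bhk : Bb (h + k) by apply: (Bb_add Bh Bk).
  have key t1 t2 : 0 < t1 -> 0 < t2 -> pdir (h + k) <= dq h t1 + dq k t2.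
    move=> t10 t20.
    have t12 : 0 < t1 + t2 by apply: addr_gt0.
    pose s := t1 * t2 / (t1 + t2); pose l := t2 / (t1 + t2).
    have s0 : 0 < s by apply: divr_gt0 => //; apply: mulr_gt0.
    have l0 : 0 < l < 1.
      apply/andP; split; first exact: divr_gt0.
      by rewrite /l ltr_pdivrMr // mul1r ltrDr.
    have e : X + s *: (h + k) =
        (fun w => l * (X + t1 *: h) w + (1 - l) * (X + t2 *: k) w).
      apply/funext => w; rewrite !fctE /GRing.scale /= /s /l; field; exact: lt0r_neq0.
    have cv := rho_convex _ _ _ (BXh t1 Bh) (BXh t2 Bk) l0.
    rewrite -e in cv.
    apply: le_trans (pdir_le Bhk s0) _.
    rewrite /dq.
    have -> : (rho (X + t1 *: h) - rho X) / t1 + (rho (X + t2 *: k) - rho X) / t2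
        = (l * rho (X + t1 *: h) + (1 - l) * rho (X + t2 *: k) - rho X) / s.
      rewrite /s /l; field.
      by rewrite !lt0r_neq0.
    apply: ler_wpM2r; first by rewrite invr_ge0 ltW.
    by rewrite lerD2r.
  have k2 t2 : 0 < t2 -> pdir (h + k) - dq k t2 <= pdir h.
    move=> t20; apply: pdir_ge => t1 t10; have := key t1 t2 t10 t20; lra.
  suff : pdir (h + k) - pdir h <= pdir k by lra.
  apply: pdir_ge => t2 t20; have := k2 t2 t20; lra.
move=> s h s0 Bh.
have Bsh : Bb (s *: h) by apply: (Bb_scale s Bh).
have dqs t : 0 < t -> dq (s *: h) t = s * dq h (t * s).
  move=> t0; rewrite /dq scalerA; field; apply/andP; split; rewrite lt0r_neq0 //.
apply/eqP; rewrite eq_le; apply/andP; split.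
  have : s^-1 * pdir (s *: h) <= pdir h.
    apply: pdir_ge => u u0.
    have := pdir_le Bsh (divr_gt0 u0 s0); rewrite dqs ?divr_gt0 //.
    rewrite mulrAC -mulrA divff ?mulr1 ?lt0r_neq0 // => hh.
    by rewrite ler_pdivrMl // mulrC -ler_pdivrMr // mulrC ?mulKf ?lt0r_neq0 //; rewrite ler_pdivrMr // mulrC.
  by rewrite ler_pdivrMl.
apply: pdir_ge => t t0; rewrite dqs //; apply: ler_wpM2l; first exact: ltW.
by apply: pdir_le => //; apply: mulr_gt0.
Qed.

Let Bb0 : @Bb d T R 0. Proof. exact: (Bb_cst 0). Qed.
Let BbD : forall x y, @Bb d T R x -> Bb y -> Bb (x + y).
Proof. by move=> x y Bx By; apply: (Bb_add Bx By). Qed.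
Let BbZ : forall (a : R) x, @Bb d T R x -> Bb (a *: x).
Proof. by move=> a x Bx; apply: (Bb_scale a Bx). Qed.

Definition phi := projT1 (cid (@hahn_banach R _ (@Bb d T R) Bb0 BbD BbZ pdir pdir_sublin)).
Let phi_spec := projT2 (cid (@hahn_banach R _ (@Bb d T R) Bb0 BbD BbZ pdir pdir_sublin)).

Lemma phi_lin a {x y} : Bb x -> Bb y -> phi (a *: x + y) = a * phi x + phi y.
Proof. exact: phi_spec.1. Qed.

Lemma phi_le {h} : Bb h -> phi h <= rho (X + h) - rho X.
Proof. by move=> Bh; apply: le_trans (phi_spec.2 _ Bh) (pdir_1 Bh). Qed.

Lemma phi0 : phi 0 = 0.
Proof. have := phi_lin 1 Bb0 Bb0; rewrite scale1r addr0 mul1r; lra. Qed.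

Lemma phi_add {x y} : Bb x -> Bb y -> phi (x + y) = phi x + phi y.
Proof. by move=> Bx By; have := phi_lin 1 Bx By; rewrite scale1r mul1r. Qed.

Lemma phi_scale a {x} : Bb x -> phi (a *: x) = a * phi x.
Proof. by move=> Bx; have := phi_lin a Bx Bb0; rewrite !addr0 phi0 addr0. Qed.

Lemma phi_mono {Y Z} : Bb Y -> Bb Z -> (forall w, Y w <= Z w) -> phi Y <= phi Z.
Proof.
move=> BY BZ le.
have B1 : Bb ((-1) *: Z + Y) by apply: BbD => //; apply: BbZ.
have := phi_le B1; rewrite phi_lin //.
have : rho (X + ((-1) *: Z + Y)) <= rho X.
  apply: rho_mono => //; first exact: BbD.
  move=> w; rewrite !fctE /GRing.scale /=; have := le w; lra.
lra.
Qed.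

Lemma phi_cst (c : R) : phi (cst c) = c.
Proof.
have B1 : @Bb d T R (cst 1) by exact: (Bb_cst 1).
have h1 : phi (cst 1) <= 1.
  have := phi_le B1.
  have -> : X + cst 1 = (fun w => X w + 1) by apply/funext => w; rewrite !fctE.
  by rewrite rho_cash //; lra.
have h2 : phi ((-1) *: (cst 1 : T -> R)) <= -1.
  have := phi_le (BbZ (-1) _ B1).
  have -> : X + (-1) *: (cst 1 : T -> R) = (fun w => X w + -1).
    by apply/funext => w; rewrite !fctE /GRing.scale /= mulr1.
  by rewrite rho_cash //; lra.
rewrite phi_scale // in h2.
have -> : cst c = c *: (cst 1 : T -> R).
  by apply/funext => w; rewrite !fctE /GRing.scale /= mulr1.
rewrite phi_scale //; suff -> : phi (cst 1) = 1 by rewrite mulr1.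
lra.
Qed.

Definition Pphi (A : set T) := phi (\1_A).

Lemma Pphi_fa : fa_prob Pphi.
Proof.
split.
- by rewrite /Pphi indicT phi_cst.
- move=> A mA; rewrite /Pphi -(phi_cst 0); apply: phi_mono.
  + exact: (Bb_cst 0).
  + exact: Bb_indic.
  + by move=> w; rewrite indicE /= ler0n.
- move=> A B mA mB AB; rewrite /Pphi -phi_add; try exact: Bb_indic.
  congr phi; apply/funext => w; rewrite !fctE !indicE in_setU.
  have : (w \in A `&` B) = false by rewrite AB in_set0.
  rewrite in_setI.
  by case: (w \in A); case: (w \in B) => //= _; rewrite ?addr0 ?add0r.
Qed.

Lemma Eint_phi Y : Bb Y -> Eint Pphi Y = phi Y.
Proof.
move=> BY.
exact: (@Eint_f d T R phi (fun a x y => @phi_lin a x y) (fun Y Z => @phi_mono Y Z) phi_cst Y BY).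
Qed.

Lemma RMax_rho Y : Bb Y -> RMax C H Y = (rho Y)%:E.
Proof.
move=> BY; rewrite /RMax /rho -ereal_inf_EFin; last exact: Hset_ne.
  by rewrite /Hset image_comp.
have [b hb] := Hset_lb _ BY; by exists b.
Qed.

Lemma Hstar_fin (P : set T -> R) : fa_prob P -> (Hstar C H P < +oo)%E ->
  exists r, Hstar C H P = r%:E.
Proof.
move=> fP; set S := Hstar C H P => Sfin.
have : ((Eint P X - H X)%:E <= S)%E by apply: ereal_sup_ubound; exists X.
case: S Sfin => [r| |] //; by exists r.
Qed.

Lemma part2_main (P : set T -> R) : calP C H P ->
  (DMin C H X <= (DP H P X)%:E + Hstar C H P)%E.
Proof.
case=> fP Sfin; have [r hr] := Hstar_fin _ fP Sfin.
have key : Eint P X - r <= rho X.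
  apply: rho_ge => // Y0 CY0 le.
  have : ((Eint P Y0 - H Y0)%:E <= Hstar C H P)%E by apply: ereal_sup_ubound; exists Y0.
  rewrite hr lee_fin => h.
  have := Eint_mono P X Y0 fP BX (CB _ CY0) le; lra.
rewrite /DMin RMax_rho // hr /DP Hcash // -EFinB -EFinD lee_fin; lra.
Qed.

Lemma Hstar_eq : Hstar C H Pphi = (phi X - rho X)%:E.
Proof.
have ub : (Hstar C H Pphi <= (phi X - rho X)%:E)%E.
  apply: ge_ereal_sup => _ [Y CY <-]; rewrite lee_fin Eint_phi; last exact: CB.
  have BY := CB _ CY.
  have BYX : Bb ((-1) *: X + Y) by apply: BbD => //; apply: BbZ.
  have := phi_le BYX; rewrite phi_lin //.
  have -> : X + ((-1) *: X + Y) = Y.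
    by rewrite scaleN1r addrA subrr add0r.
  have := rho_H _ CY; lra.
have [r hr] : exists r, Hstar C H Pphi = r%:E.
  apply: Hstar_fin; first exact: Pphi_fa.
  by apply: le_lt_trans ub _; exact: ltry.
rewrite hr in ub *; congr EFin; apply/eqP; rewrite eq_le.
rewrite lee_fin in ub; rewrite ub /=.
suff : phi X - r <= rho X by lra.
apply: rho_ge => // Y0 CY0 le.
have : ((Eint Pphi Y0 - H Y0)%:E <= Hstar C H Pphi)%E by apply: ereal_sup_ubound; exists Y0.
rewrite hr lee_fin Eint_phi; last exact: CB.
have := phi_mono BX (CB _ CY0) le; lra.
Qed.

Lemma part1_main : exists2 P, calP C H P &
  DMin C H X = ((DP H P X)%:E + Hstar C H P)%E.
Proof.
exists Pphi.
  by split; [exact: Pphi_fa | rewrite Hstar_eq; exact: ltry].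
rewrite /DMin RMax_rho // Hstar_eq /DP Hcash // Eint_phi //.
rewrite -EFinB -EFinD; congr EFin; lra.
Qed.
End Rho.

Theorem corollary3p4 (d : measure_display) (T : measurableType d) (R : realType)
  (C : set (T -> R)) (H : (T -> R) -> R) :
  lin_subspace_with_consts C ->
  premium_principle C H ->
  convex_on C H ->
  forall X, C X ->
    (exists2 P, calP C H P &
       DMin C H X = ((DP H P X)%:E + Hstar C H P)%E) /\
    (forall P, calP C H P ->
       (DMin C H X <= (DP H P X)%:E + Hstar C H P)%E).
Proof.
move=> hC hH cvx X CX; split.
  exact: (@part1_main d T R C H hC hH cvx X CX).
by move=> P; exact: (@part2_main d T R C H hC hH X CX P).
Qed.
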